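(* Let $k\ge 1$ and let $G$ be a graph with $\delta(G)\ge k$. Let $S$ be a minimal $k$TDS of $G$ with $|S|=\Gamma_{\times k,t}(G)$, and for each $v\in S$ choose a vertex $v'\in\mathrm{opn}_k(v;S)$ and set $S_v=N_G(v')\cap S$ (a $k$-subset of $S$ containing $v$). Let $L=\bigcap_{v\in S}S_v$ and $\ell=|L|$. If $\ell<k$, then \[ \Gamma_{\times k,t}(G)\le\Gamma_{\times (k-\ell),t}(G)+\ell. \]
   Context: A set $S\subseteq V(G)$ is a $k$-tuple total dominating set ($k$TDS) of a graph $G$ with $\delta(G)\ge k$ if $|N_G(x)\cap S|\ge k$ for every $x\in V(G)$. The upper $k$-tuple total domination number $\Gamma_{\times k,t}(G)$ is the maximum cardinality of a minimal (with respect to inclusion) $k$TDS of $G$. For $v\in S$, a vertex $v'$ is a $k$-open private neighbor of $v$ with respect to $S$ if $v\in N_G(v')$ and $|N_G(v')\cap S|=k$; $\mathrm{opn}_k(v;S)$ is the set of such $v'$ (nonempty for every $v\in S$ when $S$ is a minimal $k$TDS). *)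

(* Defs.v *)
From mathcomp Require Import all_boot.
Set Implicit Arguments. Unset Strict Implicit. Unset Printing Implicit Defensive.

Definition simple_graph (T : finType) (e : rel T) : Prop :=
  irreflexive e /\ symmetric e.

Definition nbhd (T : finType) (e : rel T) (x : T) : {set T} := [set y | e x y].

Definition min_deg_ge (T : finType) (e : rel T) (k : nat) : Prop :=
  forall x : T, k <= #|nbhd e x|.

Definition kTDS (T : finType) (e : rel T) (k : nat) (S : {set T}) : bool :=
  [forall x, k <= #|nbhd e x :&: S|].

Definition minimal_kTDS (T : finType) (e : rel T) (k : nat) (S : {set T}) : bool :=
  minset (kTDS e k) S.

Definition upper_ktdom (T : finType) (e : rel T) (k : nat) : nat :=
  \max_(S : {set T} | minimal_kTDS e k S) #|S|.

Definition opn (T : finType) (e : rel T) (k : nat) (v : T) (S : {set T}) : {set T} :=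
  [set v' | (v \in nbhd e v') && (#|nbhd e v' :&: S| == k)].

(* Main.v *)
Require Import Defs.
From mathcomp Require Import all_boot.
From mathcomp Require Import zify.

Theorem mainTheorem7 (T : finType) (e : rel T) (k : nat)
    (S : {set T}) (f : T -> T) :
  simple_graph e ->
  1 <= k ->
  min_deg_ge e k ->
  minimal_kTDS e k S ->
  #|S| = upper_ktdom e k ->
  (forall v, v \in S -> f v \in opn e k v S) ->
  #|\bigcap_(v in S) (nbhd e (f v) :&: S)| < k ->
  upper_ktdom e k <=
    upper_ktdom e (k - #|\bigcap_(v in S) (nbhd e (f v) :&: S)|)
    + #|\bigcap_(v in S) (nbhd e (f v) :&: S)|.
Proof.
move=> _ _ _ /minsetP [kS _] HS Hf _.
set L := \bigcap_(v in S) (nbhd e (f v) :&: S).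
have cardS : #|S| <= #|S :\: L| + #|L|.
  have := cardsID L S; have := subsetIr S L => /subset_leq_card; lia.
have key : forall v, v \in S -> #|nbhd e (f v) :&: (S :\: L)| = k - #|L|.
  move=> v vS; have := Hf v vS; rewrite inE => /andP [_ /eqP Hk].
  have sub : L \subset nbhd e (f v) :&: S by exact: (bigcap_inf v vS).
  rewrite setIDA; have := cardsID L (nbhd e (f v) :&: S).
  by rewrite (setIidPr sub) Hk; lia.
have minD : minimal_kTDS e (k - #|L|) (S :\: L).
  apply/minsetP; split.
    apply/forallP => x; move/forallP: kS => /(_ x) kx.
    rewrite setIDA; have := cardsID L (nbhd e x :&: S).
    have := subsetIr (nbhd e x :&: S) L => /subset_leq_card; lia.
  move=> B /forallP kB sBS; apply/eqP; rewrite eqEsubset sBS /=.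
  apply/subsetP => v vSL; apply/negPn/negP => vB.
  have vS : v \in S by move: vSL; rewrite inE => /andP [].
  have := kB (f v); rewrite -(key v vS) => H.
  have : nbhd e (f v) :&: B \proper nbhd e (f v) :&: (S :\: L).
    apply/properP; split; first exact: setIS.
    exists v; last by apply/negP => /setIP [_ ]; apply/negP.
    rewrite inE vSL andbT inE.
    by have := Hf v vS; rewrite inE => /andP [];  rewrite inE.
  move/proper_card; lia.
have := leq_bigmax_cond (F := fun A : {set T} => #|A|) _ minD.
rewrite /upper_ktdom in HS *; rewrite -HS; move: cardS; set m := \max_(_ | _) _; lia.
Qed.
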